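(* Let $R$ be a partially ordered commutative ring. Then $\mathrm{O}_{q<\infty}\cap\mathrm{O}_{s<\infty}=\mathrm{O}_{qs<\infty}$ for all $q,s\in\mathrm{Loc}(R)$, and $\mathrm{O}_{1<\infty}=\mathcal{K}(R)$; hence $\mathcal{D}_{\mathrm{loc}}(R)=\{\mathrm{O}_{s<\infty}:s\in\mathrm{Loc}(R)\}$ is an admissible set of domains on $\mathcal{K}(R)$.
   Context: Rings are commutative with unit; ring morphisms are unital. A partially ordered commutative ring is a commutative ring $R$ with partial order $\le$, $r\le s\Rightarrow r+t\le s+t$, positive cone $R^+$ closed under multiplication and containing all squares. $\mathbb{N}_0=\{0,1,2,\dots\}$. $\mathrm{Loc}(R)$ is the set of $s\in1+R^+$ such that $rs\in R^+$ implies $r\in R^+$ for all $r\in R$ (it is closed under multiplication). $R_{\mathrm{loc}}$: fractions $r/s$ ($r\in R$, $s\in\mathrm{Loc}(R)$), $r/s=r'/s'$ iff $rs'=r's$, ordered by $p/q\le r/s$ iff $ps\le rq$. $R^{\mathrm{bd}}_{\mathrm{loc}}=\{a:\exists n\in\mathbb{N}_0,\ -n\le a\le n\}$. $\mathcal{K}(R)$: ring morphisms $\varphi\colon R^{\mathrm{bd}}_{\mathrm{loc}}\to\mathbb{R}$ with $\varphi(a)\ge0$ for $a\ge0$, with the weak-$*$ topology (generated by $\{\varphi:\varphi(a)\in V\}$, $V\subseteq\mathbb{R}$ open). For $s\in\mathrm{Loc}(R)$, $\mathrm{O}_{s<\infty}=\{\varphi\in\mathcal{K}(R):\varphi(1/s)>0\}$.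 An admissible set of domains on a topological space $Y$ is a set of open subsets containing $Y$ and closed under pairwise intersections. *)

(* Defs.v *)
From HB Require Import structures.
From mathcomp Require Import all_boot all_order all_algebra.
From mathcomp Require Import all_classical all_reals.
From mathcomp Require Import topology normedtype Rstruct Rstruct_topology.
Set Implicit Arguments. Unset Strict Implicit. Unset Printing Implicit Defensive.
Import Order.TTheory GRing.Theory Num.Theory.
Local Open Scope ring_scope.
Local Open Scope classical_set_scope.

Notation RR := Rdefinitions.R.

Section POCR.
Variables (R : comPzRingType) (le : R -> R -> Prop).

Definition pocr : Prop :=
  (forall r, le r r) /\
  (forall r s, le r s -> le s r -> r = s) /\
  (forall r s t, le r s -> le s t -> le r t) /\
  (forall r s t, le r s -> le (r + t) (s + t)) /\
  (forall r s, le 0 r -> le 0 s -> le 0 (r * s)) /\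
  (forall r, le 0 (r * r)).

Definition Loc : set R :=
  [set s | le 0 (s - 1) /\ (forall r, le 0 (r * s) -> le 0 r)].

(* Elements of R_loc are represented by pairs (r, s) standing for r/s,
   with s in Loc(R). *)
Definition is_frac (p : R * R) : Prop := Loc p.2.
Definition feq (p q : R * R) : Prop := p.1 * q.2 = q.1 * p.2.
Definition fle (p q : R * R) : Prop := le (p.1 * q.2) (q.1 * p.2).
Definition fadd (p q : R * R) : R * R := (p.1 * q.2 + q.1 * p.2, p.2 * q.2).
Definition fmul (p q : R * R) : R * R := (p.1 * q.1, p.2 * q.2).
Definition fnat (n : nat) : R * R := (n%:R, 1).

Definition bounded (p : R * R) : Prop :=
  is_frac p /\ exists n : nat, fle (- (n%:R), 1) p /\ fle p (fnat n).

(* K(R): positive unital ring morphisms R^bd_loc -> RR, encoded as functions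
   on representatives which respect equality of fractions, and which are
   normalised to 0 on pairs that do not represent an element of R^bd_loc
   (this makes the encoding a bijection with the actual morphisms). *)
Definition Kspace : set (R * R -> RR) :=
  [set phi |
    (forall p, ~ bounded p -> phi p = 0) /\
    (forall p q, bounded p -> bounded q -> feq p q -> phi p = phi q) /\
    phi (1, 1) = 1 /\
    (forall p q, bounded p -> bounded q -> phi (fadd p q) = phi p + phi q) /\
    (forall p q, bounded p -> bounded q -> phi (fmul p q) = phi p * phi q) /\
    (forall p, bounded p -> fle (0, 1) p -> 0 <= phi p)].

(* weak-* topology on K(R): the topology generated by the subbasic sets
   {phi | phi a in V}, a in R^bd_loc, V open in RR. *)
Definition Kopen (U : set (R * R -> RR)) : Prop :=
  U `<=` Kspace /\
  forall phi, U phi ->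
    exists (n : nat) (a : 'I_n -> R * R) (V : 'I_n -> set RR),
      (forall i, bounded (a i) /\ open (V i) /\ V i (phi (a i))) /\
      (forall psi, Kspace psi -> (forall i, V i (psi (a i))) -> U psi).

Definition Ofin (s : R) : set (R * R -> RR) :=
  [set phi | Kspace phi /\ 0 < phi (1, s)].

Definition Dloc : set (set (R * R -> RR)) := [set Ofin s | s in Loc].

End POCR.

Definition admissible (X : Type) (Y : set X) (op : set X -> Prop)
  (D : set (set X)) : Prop :=
  [/\ (forall U, D U -> op U), D Y &
      (forall U V, D U -> D V -> D (U `&` V))].

(* Main.v *)
Require Import Defs.
From HB Require Import structures.
From mathcomp Require Import all_boot all_order all_algebra.
From mathcomp Require Import all_classical all_reals.
From mathcomp Require Import topology normedtype Rstruct Rstruct_topology.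
From mathcomp Require Import ring.
Import Order.TTheory GRing.Theory Num.Theory.
Local Open Scope ring_scope.
Local Open Scope classical_set_scope.

Section Aux.
Variables (R : comPzRingType) (le : R -> R -> Prop) (HR : pocr le).

Lemma le01 : le 0 1.
Proof. case: HR => _ [_ [_ [_ [_ sq]]]]. by have := sq 1; rewrite mulr1. Qed.

Lemma bnd1 s : Loc le s -> bounded le (1, s).
Proof.
move=> Ls; case: HR => rf [_ [tr [tl _]]].
have H1s : le 1 s.
  by case: Ls => H _; have := tl _ _ 1 H; rewrite add0r subrK.
have H0s : le 0 s := tr _ _ _ le01 H1s.
split => //; exists 1%N; split; rewrite /fle /=.
- rewrite mulr1 mulNr (_ : 1%:R = 1) // mul1r; apply: tr (le01).
  by have := tl _ _ (- s) H0s; rewrite add0r subrr.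
- by rewrite mulr1 mul1r.
Qed.

Lemma phi_nonneg phi s : Kspace le phi -> Loc le s -> 0 <= phi (1, s).
Proof.
move=> [_ [_ [_ [_ [_ Hp]]]]] Ls; apply: Hp; first exact: bnd1.
by rewrite /fle /= mul0r mulr1; exact: le01.
Qed.

Lemma phi_mul phi q s : Kspace le phi -> Loc le q -> Loc le s ->
  phi (1, q * s) = phi (1, q) * phi (1, s).
Proof.
move=> [_ [_ [_ [_ [Hm _]]]]] Lq Ls.
rewrite -Hm; [by rewrite /fmul /= mulr1 | exact: bnd1 | exact: bnd1].
Qed.

Lemma addpos a b : le 0 a -> le 0 b -> le 0 (a + b).
Proof.
case: HR => _ [_ [tr [tl _]]] Ha Hb.
apply: tr Hb _; have := tl _ _ b Ha; by rewrite add0r.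
Qed.

Lemma LocM q s : Loc le q -> Loc le s -> Loc le (q * s).
Proof.
case: HR => _ [_ [_ [_ [mp _]]]] [Hq Lq] [Hs Ls]; split.
- have -> : q * s - 1 = (q - 1) * (s - 1) + ((q - 1) + (s - 1)).
    by ring.
  by apply: addpos; [exact: mp | exact: addpos].
- move=> r H; apply: Lq; apply: Ls; by rewrite -mulrA.
Qed.

Lemma Ofin_inter q s : Loc le q -> Loc le s ->
  Ofin le q `&` Ofin le s = Ofin le (q * s).
Proof.
move=> Lq Ls; apply/seteqP; split => phi /=.
- move=> [[K Hq] [_ Hs]]; split => //; rewrite phi_mul //; exact: mulr_gt0.
- move=> [K H]; rewrite phi_mul // in H.
  have h1 : 0 <= phi (1, q) by exact: phi_nonneg K Lq.
  have h2 : 0 <= phi (1, s) by exact: phi_nonneg K Ls.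
  split; split => //; rewrite lt_def; apply/andP; split => //; apply/eqP => E.
  + by move: H; rewrite E mul0r ltxx.
  + by move: H; rewrite E mulr0 ltxx.
Qed.

End Aux.

Theorem proposition23 (R : comPzRingType) (le : R -> R -> Prop) (HR : pocr le) :
  (forall q s, Loc le q -> Loc le s ->
     Ofin le q `&` Ofin le s = Ofin le (q * s)) /\
  Ofin le 1 = Kspace le /\
  admissible (Kspace le) (Kopen le) (Dloc le).
Proof.
have L1 : Loc le 1.
  case: HR => rf _; split; first by rewrite subrr.
  by move=> r; rewrite mulr1.
have O1 : Ofin le 1 = Kspace le.
  apply/seteqP; split => phi /=; first by case.
  move=> K; split => //; case: K => _ [_ [-> _]]; exact: ltr01.
split; first by move=> q s; exact: Ofin_inter.
split => //; split.
- move=> U [s Ls <-]; split; first by move=> phi [].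
  move=> phi [K H]; exists 1%N, (fun _ => (1, s)), (fun _ => [set x : RR | 0 < x]).
  split; first by move=> _; split; [exact: bnd1 | split; [exact: open_gt|]].
  by move=> psi Kp /(_ ord0) Hp; split.
- by exists 1.
- move=> U V [q Lq <-] [s Ls <-]; exists (q * s); first exact: LocM.
  by rewrite Ofin_inter.
Qed.
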